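(* Let $G=(V,E)$ be any $n$-vertex $d$-regular graph with girth at least $g$, and let $m\in\mathbb{N}$. For any map $\psi:V\to V$ with $\mathrm{rad}_G(\psi)<g/2-1$, we have $$\Pr_{v\sim V,\ u_1,\dots,u_m\sim N_G(v)}\left[|\psi(\{u_1,\dots,u_m\})|<m\right]<\frac{m^2}{\sqrt{d}},$$ where $v$ is uniform on $V$ and, given $v$, $u_1,\dots,u_m$ are i.i.d. uniform samples from $N_G(v)$.
   Context: $G$ is an undirected unweighted graph; $d_G$ denotes its shortest-path metric and $N_G(v)$ the set of neighbors of $v$. The girth of $G$ is the length of its shortest cycle. For $\psi:V\to V$, $\mathrm{rad}_G(\psi)=\max_{v\in V}d_G(v,\psi(v))$. *)

(* Defs.v *)
From mathcomp Require Import all_boot all_order all_algebra.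
Set Implicit Arguments. Unset Strict Implicit. Unset Printing Implicit Defensive.
Import Order.TTheory GRing.Theory Num.Theory.

Section Graph.
Variables (T : finType) (e : rel T).

Definition simple_graph := symmetric e /\ irreflexive e.

Definition nbhd (v : T) : {set T} := [set u | e v u].

Definition regular (d : nat) := forall v, #|nbhd v| = d.

Definition is_cycle (c : seq T) := [&& cycle e c, uniq c & 2 < size c].

(* girth >= g : every cycle has length >= g (vacuous for forests, girth = oo) *)
Definition girth_ge (g : nat) := forall c, is_cycle c -> g <= size c.

Definition walk_of_len (x y : T) (k : nat) : bool :=
  [exists p : k.-tuple T, path e x p && (last x p == y)].

(* shortest-path distance; None = infinite (x, y in different components).
   A shortest walk has length < #|T|. *)
Definition dist (x y : T) : option nat :=
  if has (walk_of_len x y) (iota 0 #|T|)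
  then Some (find (walk_of_len x y) (iota 0 #|T|)) else None.

(* graph_rad = rad_G(psi) = max_v d_G(v, psi v); None = infinite *)
Definition graph_rad (psi : T -> T) : option nat :=
  if [forall v, dist v (psi v) != None]
  then Some (\max_(v : T) odflt 0 (dist v (psi v))) else None.

End Graph.

Local Open Scope ring_scope.

(* Pr_{v ~ V, u_1..u_m ~ N(v) iid uniform} [ |psi({u_1..u_m})| < m ] *)
Definition collision_prob (R : fieldType) (T : finType) (e : rel T)
    (psi : T -> T) (m : nat) : R :=
  (#|T|%:R)^-1 * \sum_(v : T)
     (#|nbhd e v|%:R ^+ m)^-1 *
     #|[set f : {ffun 'I_m -> T} |
          [forall i, f i \in nbhd e v] &&
          (#|[set psi (f i) | i : 'I_m]| < m)%N]|%:R.

(* Main.v *)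
Require Import Defs.
From mathcomp Require Import all_boot all_order all_algebra.
Import Order.TTheory GRing.Theory Num.Theory.
From mathcomp Require Import zify ring lra.
Set Implicit Arguments. Unset Strict Implicit.


Lemma card_fam1 (T : finType) (m : nat) (i : 'I_m) (X Y : {set T}) :
  #|[set f : {ffun 'I_m -> T} | [forall k, f k \in (if k == i then X else Y)]]|
  = #|X| * #|Y| ^ m.-1.
Proof.
pose F := fun k : 'I_m => [pred x | x \in (if k == i then X else Y)].
rewrite (@eq_card _ _ (family F)); last first.
  by move=> f; rewrite inE; apply/forallP/familyP => H k; have := H k; rewrite /F inE.
rewrite card_family foldrE big_map big_enum /= (bigD1 i) //= /F eqxx.
rewrite (eq_bigr (fun _ => #|Y|)); last by move=> k /negbTE ->.
by rewrite prod_nat_const cardC1 card_ord.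
Qed.

Lemma card_cover (T I : finType) (P : pred I) (A : I -> {set T}) (S : {set T}) :
  S \subset \bigcup_(i | P i) A i -> #|S| <= \sum_(i | P i) #|A i|.
Proof.
move=> H; apply: leq_trans (subset_leq_card H) _.
elim/big_rec2: _ => [|i U k Pi IH]; first by rewrite cards0.
by apply: leq_trans (leq_card_setU _ _) _; rewrite leq_add2l.
Qed.

Lemma count_v (T : finType) (psi : T -> T) (m : nat) (N B : {set T}) (a0 : T) :
  B \subset N ->
  (forall u u', u \in N -> u' \in N -> u != u' -> psi u = psi u' -> (u \in B) || (u' \in B)) ->
  #|[set f : {ffun 'I_m -> T} | [forall i, f i \in N] && (#|[set psi (f i) | i : 'I_m]| < m)%N]|
   <= m * (m.-1 * ((1 + 2 * #|B|) * #|N| ^ m.-1)).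
Proof.
move=> HBN HB.
set S := [set f | _].
pose A i j := [set f : {ffun 'I_m -> T} | [forall k, f k \in N] && (psi (f i) == psi (f j))].
have H1 : S \subset \bigcup_(i : 'I_m) \bigcup_(j | j != i) A i j.
  apply/subsetP => f; rewrite inE => /andP [HN Hc].
  have : ~~ injectiveb (fun i => psi (f i)).
    apply/negP => /injectiveP Hinj.
    by move: Hc; rewrite card_imset // card_ord ltnn.
  move/injectivePn => [i [j Hij Hpsi]].
  apply/bigcupP; exists i => //; apply/bigcupP; exists j; first by rewrite eq_sym.
  by rewrite inE HN Hpsi eqxx.
set K := (1 + 2 * #|B|) * #|N| ^ m.-1.
have Hpair : forall i j, j != i -> #|A i j| <= K.
  move=> i j Hji.
  pose E := [set f : {ffun 'I_m -> T} | [forall k, f k \in N] && (f i == f j)].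
  pose G l := [set f : {ffun 'I_m -> T} | [forall k, f k \in (if k == l then B else N)]].
  have HA : A i j \subset E :|: G i :|: G j.
    apply/subsetP => f; rewrite !inE => /andP [/forallP HN /eqP Hp].
    case: (eqVneq (f i) (f j)) => [Heq|Hne]; first by rewrite (introT forallP HN).
    have := HB _ _ (HN i) (HN j) Hne Hp => /orP [Hi|Hj].
      apply/orP; left; apply/orP; right; apply/forallP => k.
      by case: eqP => [->|_] //; apply: HN.
    apply/orP; right; apply/forallP => k.
    by case: eqP => [->|_] //; apply: HN.
  have HE : #|E| <= #|N| ^ m.-1.
    pose h (f : {ffun 'I_m -> T}) := [ffun k => if k == j then a0 else f k].
    have Hinj : {in E &, injective h}.
      move=> f1 f2; rewrite !inE => /andP [_ /eqP Hf1] /andP [_ /eqP Hf2] Hh.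
      apply/ffunP => k; have := congr1 (fun f : {ffun 'I_m -> T} => f k) Hh; rewrite !ffunE.
      case: eqP => [->|_] //.
      by rewrite -Hf1 -Hf2; have := congr1 (fun f : {ffun 'I_m -> T} => f i) Hh; rewrite !ffunE eq_sym (negbTE Hji).
    rewrite -(card_in_imset Hinj).
    apply: leq_trans (subset_leq_card (B := [set f : {ffun 'I_m -> T} | [forall k, f k \in (if k == j then [set a0] else N)]]) _) _.
      apply/subsetP => _ /imsetP [f Hf ->]; rewrite inE; apply/forallP => k; rewrite ffunE.
      case: eqP => _; first by rewrite inE.
      by move: Hf; rewrite inE => /andP [/forallP ->].
    by rewrite card_fam1 cards1 mul1n.
  have HG : forall l, #|G l| = #|B| * #|N| ^ m.-1 by move=> l; apply: card_fam1.
  apply: leq_trans (subset_leq_card HA) _.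
  apply: leq_trans (leq_card_setU _ _) _.
  rewrite HG /K mulnDl mul1n -mulnA mul2n -addnn addnA leq_add2r.
  apply: leq_trans (leq_card_setU _ _) _.
  by rewrite HG leq_add2r.
have HH := card_cover H1. apply: (leq_trans HH).
have Hi : forall i : 'I_m, #|\bigcup_(j | j != i) A i j| <= m.-1 * K.
  move=> i.
  apply: leq_trans (card_cover (P := fun j => j != i) (A := A i) (subxx _)) _.
  apply: leq_trans (leq_sum _ (P := fun j => j != i) (E2 := fun _ => K) (fun j Hj => Hpair i j Hj)) _.
  by rewrite (sum_nat_const (predC1 i)) cardC1 card_ord.
apply: leq_trans (leq_sum _ (fun i _ => Hi i)) _.
by rewrite big_const_ord iter_addn_0 mulnC.
Qed.

Lemma dist_walk (T : finType) (e : rel T) x y k :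
  dist e x y = Some k -> exists p : seq T, [/\ path e x p, last x p = y & size p = k].
Proof.
rewrite /dist; case: ifP => // Hh [<-].
have := nth_find 0 Hh; rewrite nth_iota; last by move: Hh; rewrite has_find size_iota.
rewrite add0n => /existsP [p /andP [Hp /eqP Hl]].
by exists p; rewrite size_tuple.
Qed.

Lemma walk_dist (T : finType) (e : rel T) x p :
  path e x p -> exists2 k, dist e x (last x p) = Some k & k <= size p.
Proof.
move=> Hp.
have [q [Hq Hl Hs Hsz]] : exists q : seq T, [/\ path e x q, last x q = last x p,
   size q <= size p & size q < #|T|].
  case: (ltnP (size p) #|T|) => Hs; first by exists p.
  case: (shortenP Hp) => q Hq Hu _.
  have Hc : size (x :: q) <= #|T| by move/card_uniqP: Hu => <-; apply: max_card.
  by exists q; split => //; apply: (leq_trans _ Hs); apply: ltnW.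
have Hw : walk_of_len e x (last x p) (size q).
  by apply/existsP; exists (in_tuple q); rewrite /= Hq Hl eqxx.
have Hh : has (walk_of_len e x (last x p)) (iota 0 #|T|).
  by apply/hasP; exists (size q) => //; rewrite mem_iota.
rewrite /dist Hh; exists (find (walk_of_len e x (last x p)) (iota 0 #|T|)) => //.
apply: (leq_trans _ Hs); rewrite leqNgt; apply/negP => Hlt.
by have := before_find 0 Hlt; rewrite nth_iota // add0n Hw.
Qed.

Lemma two_paths_cycle (T : finType) (e : rel T) (Hsym : symmetric e) x a b p q :
  e x a -> e x b -> a != b -> path e a p -> path e b q -> last a p = last b q ->
  uniq (x :: a :: p) -> uniq (x :: b :: q) ->
  exists c, is_cycle e c /\ (size c <= size p + size q + 2)%N.
Proof.
move=> exa exb nab pa pb hl u1 u2.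
set s1 := a :: p; set s2 := b :: q.
have P1 : path e x s1 by rewrite /= exa.
have P2 : path e x s2 by rewrite /= exb.
have Hh : has (mem s2) s1.
  by apply/hasP; exists (last a p); [apply: mem_last | rewrite hl inE /= mem_last].
set i := find (mem s2) s1.
have Hi : (i < size s1)%N by rewrite -has_find.
set z := nth x s1 i.
have zs2 : z \in s2 by have := nth_find x Hh.
set j := index z s2.
have Hj : (j < size s2)%N by rewrite index_mem.
have Hzj : nth x s2 j = z by rewrite nth_index.
have xs1 : x \notin s1 by move: u1 => /andP [].
have xs2 : x \notin s2 by move: u2 => /andP [].
have us1 : uniq s1 by move: u1 => /andP [].
have us2 : uniq s2 by move: u2 => /andP [].
have Hnh : ~~ has (mem s2) (take i s1).
  by rewrite has_take_leq ?ltnn // ltnW.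
exists (x :: take j.+1 s2 ++ rev (take i s1)); split; last first.
  rewrite /= size_cat size_rev !size_takel // ?(ltnW Hi) //.
  by move: Hi Hj; rewrite /= !ltnS => H1 H2; rewrite addn2 !ltnS addnC; exact: leq_add.
apply/and3P; split.
- rewrite /cycle rcons_cat cat_path take_path //=.
  rewrite (_ : last b (take j q) = z); last first.
    by rewrite -Hzj; change (last x (take j.+1 s2) = nth x s2 j); rewrite (take_nth x Hj) last_rcons.
  rewrite -rev_cons.
  have := rev_path e x (rcons (take i s1) z).
  rewrite belast_rcons last_rcons => ->.
  rewrite -(eq_path (e := e)); last by move=> u v; rewrite Hsym.
  by rewrite /z -take_nth // take_path.
- rewrite cons_uniq mem_cat mem_rev negb_or cat_uniq rev_uniq has_rev !take_uniq //.
  rewrite andbT; apply/andP; split; first (apply/andP; split).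
  + by apply/negP => /mem_take; apply/negP.
  + by apply/negP => /mem_take; apply/negP.
  + apply/negP => /(sub_has (a2 := mem s2)) H; move/negP: Hnh; apply; apply: H.
    by move=> y /mem_take.
- rewrite /= size_cat size_rev !size_takel // ?(ltnW Hi) //.
  case: i Hi Hnh @z zs2 @j Hj Hzj => [|i'] Hi Hnh z zs2 j Hj Hzj; last by rewrite addnS.
  case: j Hj Hzj => [|j'] Hj Hzj //.
  by move: Hzj nab; rewrite /z /= => ->; rewrite eqxx.
Qed.

Lemma size_shorten (T : eqType) (x : T) p : (size (shorten x p) <= size p)%N.
Proof.
elim: p x => [|y p IH] x //=; case: ifP => _; first exact: leqW (IH x).
by rewrite ltnS.
Qed.

Lemma geodesic (T : finType) (e : rel T) y w t : dist e y w = Some t ->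
  exists p, [/\ path e y p, last y p = w, uniq (y :: p), (size p <= t)%N &
    forall z, z \in p -> exists2 t', dist e z w = Some t' & (t' < t)%N].
Proof.
move=> /dist_walk [p0 [P0 L0 S0]].
have Hs := size_shorten y p0.
case: (shortenP P0) Hs L0 => p Pp Up _ Hs L0.
exists p; split => //; first by rewrite -S0.
move=> z Hz; move: Pp L0 Hs; case/splitPr: Hz => p1 p2.
rewrite cat_path last_cat /= => /andP [_ /andP [_ Hp2]] L0 Hs.
have [t' Ht' Hle] := walk_dist Hp2; rewrite L0 in Ht'.
exists t' => //.
apply: leq_ltn_trans Hle _; rewrite -S0; apply: leq_trans Hs.
by rewrite size_cat /= addnS ltnS leq_addl.
Qed.

Lemma no_short_two_paths (T : finType) (e : rel T) g x a b p q :
  symmetric e -> girth_ge e g ->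
  e x a -> e x b -> a != b -> path e a p -> path e b q -> last a p = last b q ->
  uniq (x :: a :: p) -> uniq (x :: b :: q) ->
  (size p + size q + 2 < g)%N -> False.
Proof.
move=> Hsym Hg xa xb ab pa pb hl u1 u2 Hs.
have [c [Hc Hsz]] := two_paths_cycle Hsym xa xb ab pa pb hl u1 u2.
have := Hg c Hc => Hgc.
by move: (leq_ltn_trans Hgc (leq_ltn_trans Hsz Hs)); rewrite ltnn.
Qed.

Lemma claimA (T : finType) (e : rel T) g r u w v1 v2 k t1 t2 :
  symmetric e -> irreflexive e -> girth_ge e g -> (2 * r < g)%N ->
  dist e u w = Some k -> (k <= r)%N ->
  e u v1 -> e u v2 -> dist e v1 w = Some t1 -> (t1 < k)%N ->
  dist e v2 w = Some t2 -> (t2 < k)%N -> v1 = v2.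
Proof.
move=> Hsym Hirr Hg Hr Hk Hkr uv1 uv2 H1 Ht1 H2 Ht2.
apply/eqP; apply/negPn/negP => Hne.
have [p1 [P1 L1 U1 S1 F1]] := geodesic H1.
have [p2 [P2 L2 U2 S2 F2]] := geodesic H2.
have Hnot : forall v p t, e u v -> uniq (v :: p) -> (t < k)%N ->
   (forall z, z \in p -> exists2 t', dist e z w = Some t' & (t' < t)%N) ->
   uniq (u :: v :: p).
  move=> v p t uv Up Htk Fp; rewrite cons_uniq Up andbT inE negb_or.
  apply/andP; split.
    by apply/negP => /eqP Huv; move: uv; rewrite Huv Hirr.
  apply/negP => /Fp [t' Ht' Hlt]; move: Ht'; rewrite Hk => -[Ht'].
  by move: (ltn_trans Hlt Htk); rewrite Ht' ltnn.
apply: (no_short_two_paths Hsym Hg uv1 uv2 Hne P1 P2).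
- by rewrite L1 L2.
- exact: Hnot U1 Ht1 F1.
- exact: Hnot U2 Ht2 F2.
- apply: leq_ltn_trans Hr; clear -S1 S2 Ht1 Ht2 Hkr; lia.
Qed.

Lemma claimB (T : finType) (e : rel T) g r v u u' w k k' t :
  symmetric e -> irreflexive e -> girth_ge e g -> (2 * r + 2 < g)%N ->
  e v u -> e v u' -> u != u' ->
  dist e u w = Some k -> (k <= r)%N -> dist e u' w = Some k' -> (k' <= r)%N ->
  dist e v w = Some t -> (k <= t)%N -> (k' <= t)%N -> False.
Proof.
move=> Hsym Hirr Hg Hr vu vu' Hne H1 Hkr H2 Hkr' Ht Hkt Hkt'.
have [p1 [P1 L1 U1 S1 F1]] := geodesic H1.
have [p2 [P2 L2 U2 S2 F2]] := geodesic H2.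
have Hnot : forall a p s, e v a -> uniq (a :: p) -> (s <= t)%N ->
   (forall z, z \in p -> exists2 t', dist e z w = Some t' & (t' < s)%N) ->
   uniq (v :: a :: p).
  move=> a p s va Up Hst Fp; rewrite cons_uniq Up andbT inE negb_or.
  apply/andP; split.
    by apply/negP => /eqP Hva; move: va; rewrite Hva Hirr.
  apply/negP => /Fp [t' Ht' Hlt]; move: Ht'; rewrite Ht => -[Ht'].
  by move: (leq_trans Hlt Hst); rewrite Ht' ltnn.
apply: (no_short_two_paths Hsym Hg vu vu' Hne P1 P2).
- by rewrite L1 L2.
- exact: Hnot U1 Hkt F1.
- exact: Hnot U2 Hkt' F2.
- apply: leq_ltn_trans Hr; clear -S1 S2 Hkr Hkr'; lia.
Qed.

Local Open Scope ring_scope.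

Lemma real_core (R : rcfType) (x s K mm M1 : R) : 0 < s -> 0 < K -> 1 <= mm ->
  mm = M1 + 1 -> 0 <= x ->
  x <= K -> x * (s * s) <= 3 * K * (mm * M1) -> x * s < mm ^+ 2 * K.
Proof.
move=> Hs HK Hmm HM Hx H1 H2.
case: (ltrP s (mm ^+ 2)) => Hc.
  have : x * s <= K * s by rewrite ler_pM2r.
  move=> H; apply: (le_lt_trans H); rewrite mulrC ltr_pM2r //.
rewrite ltNge; apply/negP => H3.
have H4 : mm ^+ 2 * K * s <= x * (s * s) by rewrite mulrA ler_pM2r.
have H5 : mm ^+ 2 * K * mm ^+ 2 <= mm ^+ 2 * K * s.
  by rewrite ler_pM2l // mulr_gt0 // exprn_gt0 // (lt_le_trans ltr01).
have H6 : mm ^+ 2 * mm ^+ 2 <= 3 * (mm * M1).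
  rewrite -(ler_pM2r HK). nra.
nra.
Qed.

Lemma real_final (R : rcfType) (n d m X : nat) : (0 < d)%N -> (0 < m)%N ->
  (X <= n * d ^ m)%N -> (X * d <= 3 * n * (m * m.-1 * d ^ m))%N ->
  (n%:R)^-1 * ((d%:R ^+ m)^-1 * X%:R) < m%:R ^+ 2 / Num.sqrt (d%:R : R).
Proof.
move=> Hd Hm HX1 HX2.
have Hs : 0 < Num.sqrt (d%:R : R) by rewrite sqrtr_gt0 ltr0n.
have Hmm : (1 : R) <= m%:R by rewrite ler1n.
case: n HX1 HX2 => [|n'] HX1 HX2.
  by rewrite invr0 mul0r divr_gt0 // exprn_gt0 // (lt_le_trans ltr01).
set n := n'.+1.
have HK : (0 : R) < n%:R * d%:R ^+ m by rewrite mulr_gt0 // exprn_gt0 // ltr0n.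
rewrite mulrA -invfM mulrC ltr_pdivrMr // mulrAC ltr_pdivlMr //.
apply: (@real_core _ _ _ _ _ (m.-1)%:R) => //.
- by rewrite natr1 prednK.
- by rewrite -natrX -natrM ler_nat.
- rewrite -expr2 sqr_sqrtr ?ler0n //.
  move: HX2; rewrite -(ler_nat R) !natrM natrX => H; apply: le_trans H _.
  by rewrite /n le_eqVlt; apply/orP; left; apply/eqP; ring.
Qed.

Theorem lemma2 (R : rcfType) (T : finType) (e : rel T) (n d g m : nat)
  (psi : T -> T) :
  simple_graph e -> #|T| = n -> regular e d -> girth_ge e g ->
  (0 < d)%N -> (0 < m)%N ->
  (exists2 r : nat, graph_rad e psi = Some r & (r%:R : R) < g%:R / 2 - 1) ->
  collision_prob R e psi m < (m%:R ^+ 2) / Num.sqrt (d%:R : R).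
Proof.
move=> [Hsym Hirr] Hn Hreg Hg Hd Hm [r Hr Hrg].
have Hgr : (2 * r + 2 < g)%N.
  have : ((2 * r + 2)%N%:R : R) < g%:R by rewrite natrD natrM; lra.
  by rewrite ltr_nat.
have Hrad : forall u, exists2 k, dist e u (psi u) = Some k & (k <= r)%N.
  move: Hr; rewrite /graph_rad; case: ifP => // /forallP Hall [<-] u.
  have := Hall u; case Hdu: dist => [k|] // _; exists k => //.
  by have := leq_bigmax (F := fun v => odflt 0%N (dist e v (psi v))) u; rewrite /= Hdu.
have Hnb : forall v u, e v u -> exists t, dist e v (psi u) = Some t.
  move=> v u Hvu; have [k Hk _] := Hrad u.
  have [p [Pp Lp _]] := dist_walk Hk.
  have Pv : path e v (u :: p) by rewrite /= Hvu.
  by have [t Ht _] := walk_dist Pv; exists t; rewrite -Lp.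
pose dd x y := odflt 0%N (dist e x y).
pose B v := [set u | e v u & (dd v (psi u) < dd u (psi u))%N].
have HBsub : forall v, B v \subset nbhd e v.
  by move=> v; apply/subsetP => u; rewrite !inE => /andP [].
have HBv : forall v u u', u \in nbhd e v -> u' \in nbhd e v -> u != u' ->
    psi u = psi u' -> (u \in B v) || (u' \in B v).
  move=> v u u'; rewrite !inE => Hu Hu' Hne Hp.
  rewrite Hu Hu' /=; apply/negPn/negP; rewrite negb_or -!leqNgt => /andP [H1 H2].
  have [k Hk Hkr] := Hrad u; have [k' Hk' Hkr'] := Hrad u'.
  have [t Ht] := Hnb v u Hu.
  move: H1 H2; rewrite /dd Hk Hk' -Hp Ht /= => H1 H2.
  rewrite -Hp in Hk'.
  exact: (claimB Hsym Hirr Hg Hgr Hu Hu' Hne Hk Hkr Hk' Hkr' Ht H1 H2).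
have HsumB : (\sum_v #|B v| <= n)%N.
  apply: (@leq_trans (\sum_(u : T) 1)); last by rewrite sum_nat_const muln1 Hn.
  have -> : (\sum_v #|B v| = \sum_v \sum_u (u \in B v : nat))%N.
    apply: eq_bigr => v _; rewrite -sum1_card big_mkcond /=.
    by apply: eq_bigr => u _; case: (u \in B v).
  rewrite exchange_big; apply: leq_sum => u _.
  have -> : (\sum_v (u \in B v : nat) = #|[set v | u \in B v]|)%N.
    rewrite -sum1_card [in RHS]big_mkcond /=.
    by apply: eq_bigr => v _; rewrite inE; case: (u \in B v).
  apply/card_le1_eqP => v1 v2; rewrite !inE => /andP [Hv1 Hb1] /andP [Hv2 Hb2].
  have [k Hk Hkr] := Hrad u.
  have [t1 Ht1] := Hnb v1 u Hv1; have [t2 Ht2] := Hnb v2 u Hv2.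
  move: Hb1 Hb2; rewrite /dd Hk Ht1 Ht2 /= => Hb1 Hb2.
  have Hgr' : (2 * r < g)%N by apply: leq_ltn_trans Hgr; rewrite leq_addr.
  rewrite Hsym in Hv1; rewrite Hsym in Hv2.
  apply/esym; exact: (claimA Hsym Hirr Hg Hgr' Hk Hkr Hv1 Hv2 Ht1 Hb1 Ht2 Hb2).
pose S v := [set f : {ffun 'I_m -> T} | [forall i, f i \in nbhd e v] &&
          (#|[set psi (f i) | i : 'I_m]| < m)%N].
have Edm : (d ^ m = d ^ m.-1 * d)%N by rewrite -expnSr prednK.
have Hcount : forall v, (#|S v| * d <= m * m.-1 * d ^ m * (1 + 2 * #|B v|))%N.
  move=> v; have := @count_v T psi m (nbhd e v) (B v) v (HBsub v) (HBv v); rewrite Hreg => H.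
  apply: leq_trans (leq_mul H (leqnn d)) _.
  by rewrite Edm !mulnA leq_eqVlt; apply/orP; left; apply/eqP; ring.
have Hle1 : forall v, (#|S v| <= d ^ m)%N.
  move=> v; pose i0 := Ordinal Hm.
  have := card_fam1 i0 (nbhd e v) (nbhd e v); rewrite Hreg -expnS prednK // => <-.
  apply: subset_leq_card; apply/subsetP => f; rewrite !inE => /andP [/forallP H _].
  by apply/forallP => k; case: (k == i0); apply: H.
pose X := (\sum_v #|S v|)%N.
have HX1 : (X <= n * d ^ m)%N.
  by apply: leq_trans (leq_sum _ (fun v _ => Hle1 v)) _; rewrite sum_nat_const Hn.
have HX2 : (X * d <= 3 * n * (m * m.-1 * d ^ m))%N.
  rewrite /X big_distrl /=; apply: leq_trans (leq_sum _ (fun v _ => Hcount v)) _.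
  rewrite -big_distrr /= big_split /= sum_nat_const -big_distrr /= Hn.
  rewrite mulnC leq_mul2r; apply/orP; right.
  by move: HsumB; clear; lia.
rewrite /collision_prob Hn.
under eq_bigr => v _ do rewrite Hreg.
rewrite -mulr_sumr -natr_sum.
exact: real_final.
Qed.
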